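(* Let $(G_n)_{n\in\mathbb{N}}$ be a sequence of groups equipped with a diverse $d$-ary cloning system. Then the normalizer of $F_d$ in $\mathscr{T}_d(G_* )$ equals $F_d$, i.e. $\{x\in\mathscr{T}_d(G_* ): x^{-1}F_dx=F_d\}=F_d$.
   Context: Fix an integer $d\ge 2$. A $d$-ary tree is a finite rooted tree in which each non-leaf vertex has exactly $d$ ordered children; leaves are numbered $1,\dots,n$ left to right. For $1\le k\le n$, $T_k$ is $T$ with a $d$-ary caret attached to its $k$-th leaf. Standard cloning maps: for $\sigma\in S_n$, $1\le k\le n$, partition $\{1,\dots,n+d-1\}$ into consecutive blocks $B^{(k)}_j=\{j\}$ ($j<k$), $B^{(k)}_k=\{k,\dots,k+d-1\}$, $B^{(k)}_j=\{j+d-1\}$ ($j>k$); $(\sigma)\varsigma_k^n$ maps $B^{(k)}_j$ onto $B^{(\sigma(k))}_{\sigma(j)}$ order-preservingly. A $d$-ary cloning system: groups $(G_n)$, homomorphisms $\rho_n:G_n\to S_n$, injective functions $\kappa_k^n:G_n\to G_{n+d-1}$ written on the right with $(g)(\kappa\circ\kappa'):=((g)\kappa)\kappa'$, such that for $1\le k<\ell\le n$, $g,h\in G_n$: (C1) $(gh)\kappa_k^n=(g)\kappa^n_{\rho_n(h)k}(h)\kappa_k^n$; (C2) $\kappa_\ell^n\circ\kappa_k^{n+d-1}=\kappa_k^n\circ\kappa_{\ell+d-1}^{n+d-1}$; (C3) $\rho_{n+d-1}((g)\kappa_k^n)(i)=((\rho_n(g))\varsigma_k^n)(i)$ for $i\notin\{k,\dots,k+d-1\}$.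 $\mathscr{T}_d(G_* )$: classes $[T,g,U]$ ($T,U$ with $n$ leaves, $g\in G_n$) under the equivalence generated by $(T,g,U)\sim(T_{\rho_n(g)(k)},(g)\kappa_k^n,U_k)$, product $[T,g,U][U,h,W]=[T,gh,W]$. The elements $[T,1,U]$ form the subgroup $F_d$. Diverse: some $n_0$ has $\bigcap_{k=1}^n\mathrm{Im}\,\kappa_k^n=\{1\}$ for all $n\ge n_0$. *)

(* Defs.v *)
From Stdlib Require Import Relations.
From HB Require Import structures.
From mathcomp Require Import all_boot all_fingroup.
Set Implicit Arguments. Unset Strict Implicit. Unset Printing Implicit Defensive.

(* Conventions: leaves, children and indices are numbered from 0
   (the paper numbers from 1); leaf k here = leaf k+1 in the paper. *)

Inductive tree : Type := Leaf : tree | Node : seq tree -> tree.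

Fixpoint nleaves (t : tree) : nat :=
  match t with
  | Leaf => 1
  | Node ts => (fix f (ts : seq tree) : nat :=
                  match ts with [::] => 0 | t :: ts => nleaves t + f ts end) ts
  end.

Fixpoint dary (d : nat) (t : tree) : bool :=
  match t with
  | Leaf => true
  | Node ts => (size ts == d) &&
               (fix f (ts : seq tree) : bool :=
                  match ts with [::] => true | t :: ts => dary d t && f ts end) ts
  end.

(* addc d k t = t_k : t with a d-ary caret attached to its k-th leaf (0-based) *)
Fixpoint addc (d k : nat) (t : tree) : tree :=
  match t with
  | Leaf => if k == 0 then Node (nseq d Leaf) else Leaf
  | Node ts => Node ((fix go (k : nat) (ts : seq tree) : seq tree :=
                        match ts with
                        | [::] => [::]
                        | t :: ts => if k < nleaves t then addc d k t :: ts
                                     else t :: go (k - nleaves t) ts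
                        end) k ts)
  end.

Definition permn (n : nat) (s : 'S_n) (k : nat) : nat :=
  match @insub _ (fun i => i < n) 'I_n k with Some o => val (s o) | None => k end.

(* standard cloning map (sigma)varsigma_k^n, as a function on indices
   {0,...,n+d-2}; blocks B^(k)_j = {j} (j<k), {k,...,k+d-1} (j=k), {j+d-1} (j>k) *)
Definition blk_start (d m j : nat) : nat := if j <= m then j else j + d.-1.
Definition blk_idx (d k i : nat) : nat :=
  if i < k then i else if i < k + d then k else i - d.-1.
Definition blk_off (d k i : nat) : nat := if (k <= i < k + d) then i - k else 0.
Definition sclone (d n : nat) (s : 'S_n) (k i : nat) : nat :=
  blk_start d (permn s k) (permn s (blk_idx d k i)) + blk_off d k i.

Record cloning_system (d : nat) := CloningSystem {
  G : nat -> Type;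
  gmul : forall n, G n -> G n -> G n;
  gone : forall n, G n;
  ginv : forall n, G n -> G n;
  gmulA : forall n (x y z : G n), gmul x (gmul y z) = gmul (gmul x y) z;
  gmul1 : forall n (x : G n), gmul (gone n) x = x;
  gmulV : forall n (x : G n), gmul (ginv x) x = gone n;
  rho : forall n, G n -> 'S_n;
  (* rho_n is a homomorphism, permutations composed as functions *)
  rhoM : forall n (g h : G n) (i : 'I_n), rho (gmul g h) i = rho g (rho h i);
  kappa : forall n, nat -> G n -> G (n + d.-1);
  kappa_inj : forall n k, k < n -> injective (@kappa n k);
  cloneC1 : forall n k (g h : G n), k < n ->
    kappa k (gmul g h) = gmul (kappa (permn (rho h) k) g) (kappa k h);
  cloneC2 : forall n k l (g : G n), k < l < n ->
    kappa k (kappa l g) = kappa (l + d.-1) (kappa k g);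
  cloneC3 : forall n k (g : G n) (i : 'I_(n + d.-1)), k < n ->
    ~~ (k <= i < k + d) -> val (rho (kappa k g) i) = sclone d (rho g) k i
}.

Arguments gmul {d} c {n}.
Arguments gone {d} c n.
Arguments ginv {d} c {n}.
Arguments rho {d} c {n}.
Arguments kappa {d} c {n}.

Definition diverse d (c : cloning_system d) : Prop :=
  exists n0, forall n, n0 <= n -> forall g : G c (n + d.-1),
    (forall k, k < n -> exists h : G c n, kappa c k h = g) -> g = gone c (n + d.-1).

Section Td.
Variables (d : nat) (c : cloning_system d).

Record triple := Triple { tn : nat; tT : tree; tg : G c tn; tU : tree }.

Definition wf_triple (x : triple) : Prop :=
  dary d (tT x) /\ dary d (tU x) /\ nleaves (tT x) = tn x /\ nleaves (tU x) = tn x.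

Inductive expand : triple -> triple -> Prop :=
  expand_intro n T (g : G c n) U k :
    wf_triple (Triple T g U) -> k < n ->
    expand (Triple T g U)
           (Triple (addc d (permn (rho c g) k) T) (kappa c k g) (addc d k U)).

Definition tequiv : relation triple := clos_refl_sym_trans triple expand.

(* elements of T_d(G_* ) are equivalence classes, represented as predicates *)
Definition cls (x : triple) : triple -> Prop := fun y => tequiv y x.

Definition tmul (X Y : triple -> Prop) : triple -> Prop := fun z =>
  exists n T (g : G c n) U (h : G c n) W,
    X (Triple T g U) /\ Y (Triple U h W) /\ tequiv z (Triple T (gmul c g h) W).

Definition tinv (X : triple -> Prop) : triple -> Prop := fun z =>
  exists n T (g : G c n) U, X (Triple T g U) /\ tequiv z (Triple U (ginv c g) T).

Definition Fd (X : triple -> Prop) : Prop :=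
  exists n T U, wf_triple (Triple T (gone c n) U) /\ X = cls (Triple T (gone c n) U).

Definition conjFd (X : triple -> Prop) (Y : triple -> Prop) : Prop :=
  exists Z, Fd Z /\ Y = tmul (tmul (tinv X) Z) X.

End Td.

(* Main.v *)
Require Import Defs.
From mathcomp Require Import all_boot all_fingroup.
From Stdlib Require Import Relations Lia FunctionalExtensionality PropExtensionality.
From mathcomp Require Import zify.
Set Implicit Arguments. Unset Strict Implicit. Unset Printing Implicit Defensive.

Fixpoint allT (P : tree -> Prop) (ts : seq tree) : Prop :=
  match ts with [::] => True | t :: ts => P t /\ allT P ts end.

Fixpoint tree_ind' (P : tree -> Prop) (HL : P Leaf)
  (HN : forall ts, allT P ts -> P (Node ts)) (t : tree) : P t :=
  match t with
  | Leaf => HL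
  | Node ts => HN ts ((fix f (ts : seq tree) : allT P ts :=
        match ts with [::] => I | t :: ts => conj (tree_ind' HL HN t) (f ts) end) ts)
  end.

Lemma nleavesE ts : nleaves (Node ts) = sumn (map nleaves ts).
Proof. by elim: ts => //= t ts ->. Qed.

Lemma daryE d ts : dary d (Node ts) = (size ts == d) && all (dary d) ts.
Proof. rewrite /=; congr (_ && _); by elim: ts => //= t ts ->. Qed.

Fixpoint addcl d (k : nat) (ts : seq tree) : seq tree :=
  match ts with
  | [::] => [::]
  | t :: ts => if k < nleaves t then addc d k t :: ts
               else t :: addcl d (k - nleaves t) ts
  end.

Lemma addcE d k ts : addc d k (Node ts) = Node (addcl d k ts).
Proof. rewrite /=; congr Node; elim: ts k => //= t ts IH k; by rewrite IH. Qed.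

Fixpoint graft (t : tree) (ss : seq tree) : tree :=
  match t with
  | Leaf => head Leaf ss
  | Node ts => Node ((fix go (ts : seq tree) (ss : seq tree) : seq tree :=
       match ts with
       | [::] => [::]
       | t :: ts => graft t (take (nleaves t) ss) :: go ts (drop (nleaves t) ss)
       end) ts ss)
  end.

Fixpoint graftl (ts : seq tree) (ss : seq tree) : seq tree :=
  match ts with
  | [::] => [::]
  | t :: ts => graft t (take (nleaves t) ss) :: graftl ts (drop (nleaves t) ss)
  end.

Lemma graftE ts ss : graft (Node ts) ss = Node (graftl ts ss).
Proof. rewrite /=; congr Node; elim: ts ss => //= t ts IH ss; by rewrite IH. Qed.

Lemma size_graftl ts ss : size (graftl ts ss) = size ts.
Proof. by elim: ts ss => //= t ts IH ss; rewrite IH. Qed.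

Lemma graft_leaves t : graft t (nseq (nleaves t) Leaf) = t.
Proof.
elim/tree_ind': t => // ts IH; rewrite graftE nleavesE; congr Node.
elim: ts IH => //= t ts IHl [IHt IHts].
rewrite take_nseq ?leq_addr // drop_nseq addKn IHt; congr cons; exact: IHl.
Qed.

Lemma graftl_leaves ts : graftl ts (nseq (sumn (map nleaves ts)) Leaf) = ts.
Proof. by have := graft_leaves (Node ts); rewrite graftE nleavesE => -[]. Qed.

Lemma nleaves_graft t ss : size ss = nleaves t ->
  nleaves (graft t ss) = sumn (map nleaves ss).
Proof.
elim/tree_ind': t ss => [|ts IH] ss.
  by case: ss => [|s [|]] //= _; rewrite ?addn0.
rewrite graftE !nleavesE => Hs.
elim: ts IH ss Hs => [_|t ts IHl [IHt IHts]] ss /=; first by case: ss.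
move=> Hs.
rewrite IHt; last by rewrite size_takel //; lia.
rewrite IHl //; last by rewrite size_drop; lia.
by rewrite -sumn_cat -map_cat cat_take_drop.
Qed.

Lemma dary_graft d t ss : dary d t -> all (dary d) ss -> size ss = nleaves t ->
  dary d (graft t ss).
Proof.
elim/tree_ind': t ss => [|ts IH] ss.
  by case: ss => [|s [|]] //= _ /andP[].
rewrite graftE !daryE nleavesE size_graftl => /andP[-> Hts] Hss Hs /=.
elim: ts IH ss Hss Hs Hts => [_|t ts IHl [IHt IHts]] ss //= Hss Hs /andP[Ht Hts].
rewrite -(cat_take_drop (nleaves t) ss) all_cat in Hss; case/andP: Hss => H1 H2.
rewrite IHt //; last by rewrite size_takel //; lia.
rewrite IHl //; by rewrite size_drop; lia.
Qed.

Lemma graft_inj t ss ss' : size ss = nleaves t -> size ss' = nleaves t ->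
  graft t ss = graft t ss' -> ss = ss'.
Proof.
elim/tree_ind': t ss ss' => [|ts IH] ss ss'.
  by case: ss => [|s [|]] //; case: ss' => [|s' [|]] //= _ _ ->.
rewrite !graftE nleavesE => Hs Hs' [].
elim: ts IH ss ss' Hs Hs' => [_|t ts IHl [IHt IHts]] ss ss' /=.
  by case: ss => //; case: ss'.
move=> Hs Hs' [E1 E2].
rewrite -(cat_take_drop (nleaves t) ss) -(cat_take_drop (nleaves t) ss').
congr (_ ++ _).
  apply: IHt E1; rewrite size_takel //; lia.
apply: IHl E2 => //; rewrite size_drop; lia.
Qed.
Fixpoint gmap2 (ss : seq tree) (rrs : seq (seq tree)) : seq tree :=
  match ss, rrs with s :: ss, r :: rrs => graft s r :: gmap2 ss rrs | _, _ => [::] end.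

Lemma take_gmap2 n ss rrs : take n (gmap2 ss rrs) = gmap2 (take n ss) (take n rrs).
Proof.
elim: ss n rrs => [|s ss IH] [|n] [|r rrs] //=; by rewrite IH.
Qed.

Lemma drop_gmap2 n ss rrs : drop n (gmap2 ss rrs) = gmap2 (drop n ss) (drop n rrs).
Proof.
elim: ss n rrs => [|s ss IH] [|n] [|r rrs] //=; by case: (drop n ss).
Qed.

Lemma graft_assoc t ss rrs : size ss = nleaves t -> shape rrs = map nleaves ss ->
  graft (graft t ss) (flatten rrs) = graft t (gmap2 ss rrs).
Proof.
elim/tree_ind': t ss rrs => [|ts IH] ss rrs.
  case: ss => [|s [|]] //= _; case: rrs => [|r [|]] //= _.
  by rewrite cats0.
rewrite !graftE nleavesE => Hs Hsh; congr Node.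
elim: ts IH ss rrs Hs Hsh => [_|t ts IHl [IHt IHts]] ss rrs //= Hs Hsh.
have Hm : nleaves t <= size ss by lia.
have E : nleaves (graft t (take (nleaves t) ss)) = size (flatten (take (nleaves t) rrs)).
  rewrite nleaves_graft ?size_takel // size_flatten.
  by rewrite /shape !map_take -/(shape rrs) Hsh.
rewrite -{1 2}(cat_take_drop (nleaves t) rrs) flatten_cat.
rewrite E take_size_cat // drop_size_cat //.
rewrite take_gmap2 drop_gmap2.
rewrite IHt ?size_takel //; last by rewrite /shape !map_take -/(shape rrs) Hsh.
congr cons; apply: IHl => //.
  by rewrite size_drop; lia.
by rewrite /shape !map_drop -/(shape rrs) Hsh.
Qed.
Definition car d := Node (nseq d Leaf).
Definition cs d k N := nseq k Leaf ++ car d :: nseq (N - k.+1) Leaf.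

Lemma addc_graft d k t : k < nleaves t -> addc d k t = graft t (cs d k (nleaves t)).
Proof.
elim/tree_ind': t k => [|ts IH] k.
  by case: k.
rewrite addcE graftE nleavesE => Hk; congr Node.
elim: ts IH k Hk => [_|t ts IHl [IHt IHts]] k //= Hk.
set m := nleaves t; set N := sumn _.
case: (ltnP k m) => Hkm.
  have E1 : take m (cs d k (m + N)) = cs d k m.
    rewrite /cs take_cat size_nseq ltnNge (ltnW Hkm) /=.
    have -> : m - k = (m - k.+1).+1 by lia.
    by rewrite /= take_nseq //; lia.
  have E2 : drop m (cs d k (m + N)) = nseq N Leaf.
    rewrite /cs drop_cat size_nseq ltnNge (ltnW Hkm) /=.
    have -> : m - k = (m - k.+1).+1 by lia.
    rewrite /= drop_nseq; congr nseq; lia.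
  by rewrite E1 E2 graftl_leaves -IHt.
have E1 : take m (cs d k (m + N)) = nseq m Leaf.
  rewrite /cs take_cat size_nseq.
  case: ltnP => Hmk; first by rewrite take_nseq.
  have -> : m = k by lia.
  by rewrite subnn take0 cats0.
have E2 : drop m (cs d k (m + N)) = cs d (k - m) N.
  rewrite /cs drop_cat size_nseq.
  case: ltnP => Hmk.
    rewrite drop_nseq; congr (_ ++ _ :: nseq _ _); lia.
  have Em : m = k by lia.
  rewrite Em subnn drop0 /=; congr (_ :: nseq _ _); lia.
rewrite E1 E2 graft_leaves; congr cons.
rewrite /N; apply: (IHl IHts (k - m)); rewrite /m; lia.
Qed.

Lemma size_cs d k N : k < N -> size (cs d k N) = N.
Proof. rewrite /cs size_cat /= !size_nseq; lia. Qed.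

Lemma nleaves_car d : nleaves (car d) = d.
Proof. rewrite /car nleavesE; elim: d => //= d ->; lia. Qed.

Lemma all_leaves d n : all (dary d) (nseq n Leaf).
Proof. by elim: n. Qed.

Lemma dary_car d : dary d (car d).
Proof. by rewrite /car daryE size_nseq eqxx all_leaves. Qed.

Lemma all_cs d k N : all (dary d) (cs d k N).
Proof.
rewrite /cs all_cat all_leaves /=; apply/andP; split; [exact: dary_car | exact: all_leaves].
Qed.

Lemma sumn_nseq1 n : sumn (map nleaves (nseq n Leaf)) = n.
Proof. by elim: n => //= n ->. Qed.

Lemma nleaves_addc d k t : 0 < d -> k < nleaves t -> nleaves (addc d k t) = nleaves t + d.-1.
Proof.
move=> Hd Hk; rewrite addc_graft // nleaves_graft ?size_cs //.
rewrite /cs map_cat sumn_cat map_cons nleaves_car !sumn_nseq1 /= sumn_nseq1; lia.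
Qed.

Lemma dary_addc d k t : k < nleaves t -> dary d t -> dary d (addc d k t).
Proof.
move=> Hk Ht; rewrite addc_graft //; apply: dary_graft => //.
  exact: all_cs.
exact: size_cs.
Qed.

Lemma nleaves_pos d t : 0 < d -> dary d t -> 0 < nleaves t.
Proof.
move=> Hd; case: t => // ts; rewrite daryE nleavesE => /andP[/eqP Hs Hall].
case: ts Hs Hall => [|t ts] /=; first by move=> Hs; lia.
move=> _ /andP[Ht _]; suff : 0 < nleaves t by lia.
elim/tree_ind': t Ht => // ts' IH; rewrite daryE nleavesE => /andP[/eqP Hs Hall].
case: ts' IH Hs Hall => [|t' ts'] /=; first by lia.
move=> [IHt _] _ /andP[Ht' _]; have := IHt Ht'; lia.
Qed.
Lemma tree_join d t u : dary d t -> dary d u -> exists ra rb,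
  [/\ all (dary d) ra, all (dary d) rb, size ra = nleaves t, size rb = nleaves u
    & graft t ra = graft u rb].
Proof.
elim/tree_ind': t u => [|ts IH] u Ht Hu.
  exists [:: u], (nseq (nleaves u) Leaf); split => //=.
  - by rewrite Hu.
  - exact: all_leaves.
  - by rewrite size_nseq.
  - by rewrite graft_leaves.
case: u Hu => [|ts'] Hu.
  exists (nseq (nleaves (Node ts)) Leaf), [:: Node ts]; split => //.
  - exact: all_leaves.
  - by apply/andP; split.
  - by rewrite size_nseq.
  - by rewrite graft_leaves.
move: Ht Hu; rewrite !daryE !nleavesE => /andP[/eqP Hs Ha] /andP[/eqP Hs' Ha'].
have : size ts = size ts' by rewrite Hs Hs'.
move: Ha Ha'; clear Hs Hs'.
elim: ts IH ts' => [_|t ts IHl [IHt IHts]] [|t' ts'] //= Ha Ha' Hsz.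
  by exists [::], [::].
case/andP: Ha => Ht Hts; case/andP: Ha' => Ht' Hts'.
have [ra1 [rb1 [A1 B1 C1 D1 E1]]] := IHt t' Ht Ht'.
have [ra2 [rb2 [A2 B2 C2 D2 E2]]] := IHl IHts ts' Hts Hts' (eq_add_S _ _ Hsz).
move: E2; rewrite !graftE => -[E2].
exists (ra1 ++ ra2), (rb1 ++ rb2); split.
- by rewrite all_cat A1 A2.
- by rewrite all_cat B1 B2.
- by rewrite size_cat C1 C2.
- by rewrite size_cat D1 D2.
rewrite take_size_cat // drop_size_cat // take_size_cat // drop_size_cat // E1.
by congr (Node (_ :: _)); exact: E2.
Qed.

Lemma forest_join d s r : size s = size r -> all (dary d) s -> all (dary d) r ->
  exists a b : seq (seq tree),
  [/\ shape a = map nleaves s, shape b = map nleaves r,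
      all (all (dary d)) a, all (all (dary d)) b & gmap2 s a = gmap2 r b].
Proof.
elim: s r => [|t s IH] [|u r] //= Hsz.
  by move=> _ _; exists [::], [::].
case/andP=> Ht Hs /andP[Hu Hr].
have [ra [rb [A B C D E]]] := tree_join Ht Hu.
have [a [b [A' B' C' D' E']]] := IH r (eq_add_S _ _ Hsz) Hs Hr.
exists (ra :: a), (rb :: b); split => /=.
- by rewrite C A'.
- by rewrite D B'.
- by rewrite A C'.
- by rewrite B D'.
by rewrite E E'.
Qed.
Definition isNode (t : tree) := if t is Node _ then true else false.

Fixpoint tsize (t : tree) : nat :=
  match t with
  | Leaf => 0
  | Node ts => ((fix f (ts : seq tree) : nat :=
                  match ts with [::] => 0 | t :: ts => tsize t + f ts end) ts).+1
  end.

Lemma tsizeE ts : tsize (Node ts) = (sumn (map tsize ts)).+1.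
Proof. by rewrite /=; congr S; elim: ts => //= t ts ->. Qed.

Lemma forest_cases ss : ss = nseq (size ss) Leaf \/
  exists i ts, i < size ss /\ nth Leaf ss i = Node ts.
Proof.
elim: ss => [|s ss IH]; first by left.
case: s => [|ts].
  case: IH => [E|[i [ts [Hi Hn]]]]; first by left; rewrite /= -E.
  by right; exists i.+1, ts.
by right; exists 0, ts.
Qed.

Lemma flatten_single (l : seq tree) : flatten (map (fun s => [:: s]) l) = l.
Proof. by elim: l => //= s l ->. Qed.

Lemma shape_single (l : seq tree) : shape (map (fun s => [:: s]) l) = nseq (size l) 1.
Proof. by elim: l => //= s l ->. Qed.

Lemma gmap2_cat s1 s2 r1 r2 : size s1 = size r1 ->
  gmap2 (s1 ++ s2) (r1 ++ r2) = gmap2 s1 r1 ++ gmap2 s2 r2.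
Proof. by elim: s1 r1 => [|s s1 IH] [|r r1] //= [] /IH ->. Qed.

Lemma gmap2_single (l : seq tree) :
  gmap2 (nseq (size l) Leaf) (map (fun s => [:: s]) l) = l.
Proof. by elim: l => //= s l ->. Qed.

Lemma graftl_leaves_gen (ts : seq tree) : graftl (nseq (size ts) Leaf) ts = ts.
Proof.
elim: ts => //= t ts IH; by rewrite ?drop0 IH.
Qed.

Lemma graft_car d ts : size ts = d -> graft (car d) ts = Node ts.
Proof. by move=> <-; rewrite /car graftE graftl_leaves_gen. Qed.

Lemma map_nleaves_nseq n : map nleaves (nseq n Leaf) = nseq n 1.
Proof. by elim: n => //= n ->. Qed.

Lemma graft_step d t ss i ts : size ss = nleaves t -> i < size ss ->
  nth Leaf ss i = Node ts -> size ts = d ->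
  graft t ss = graft (addc d i t) (take i ss ++ ts ++ drop i.+1 ss).
Proof.
move=> Hs Hi Hn Hts.
set rrs := map (fun s => [:: s]) (take i ss) ++ ts :: map (fun s => [:: s]) (drop i.+1 ss).
have Hfl : flatten rrs = take i ss ++ ts ++ drop i.+1 ss.
  by rewrite /rrs flatten_cat /= !flatten_single.
have Hti : size (take i ss) = i by rewrite size_takel // ltnW.
have Hdi : size (drop i.+1 ss) = nleaves t - i.+1 by rewrite size_drop Hs.
rewrite addc_graft -?Hs // -Hfl graft_assoc ?size_cs -?Hs //.
  congr graft.
  rewrite /cs gmap2_cat ?size_map ?size_nseq //.
  have E3 : forall X Y, gmap2 (car d :: X) (ts :: Y) = Node ts :: gmap2 X Y.
    by move=> X Y; exact: (congr1 (fun z => z :: gmap2 X Y) (graft_car Hts)).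
  rewrite E3.
  have E1 := gmap2_single (take i ss); rewrite Hti in E1; rewrite E1.
  have E2 := gmap2_single (drop i.+1 ss); rewrite size_drop in E2; rewrite E2.
  by rewrite -Hn -drop_nth // cat_take_drop.
rewrite /rrs /shape map_cat /= -!/(shape _) !shape_single Hti Hdi.
by rewrite /cs map_cat map_cons nleaves_car !map_nleaves_nseq Hts Hs.
Qed.

Lemma size_gmap2 s rs : size s = size rs -> size (gmap2 s rs) = size s.
Proof. by elim: s rs => [|x s IH] [|r rs] //= [] /IH ->. Qed.

Lemma all_dary_gmap2 d s rs : all (dary d) s -> all (all (dary d)) rs ->
  shape rs = map nleaves s -> all (dary d) (gmap2 s rs).
Proof.
elim: s rs => [|x s IH] [|r rs] //= /andP[Hx Hs] /andP[Hr Hrs] [Hsz Hsh].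
rewrite IH // andbT; exact: dary_graft.
Qed.

Lemma all_reshape d sh (l : seq tree) : all (dary d) l -> all (all (dary d)) (reshape sh l).
Proof.
elim: sh l => //= n sh IH l Hl; rewrite IH ?andbT.
  by move: Hl; rewrite -{1}(cat_take_drop n l) all_cat => /andP[].
by move: Hl; rewrite -{1}(cat_take_drop n l) all_cat => /andP[].
Qed.

Lemma graft_graft d t ss rr : all (dary d) ss -> size ss = nleaves t ->
  all (dary d) rr -> size rr = nleaves (graft t ss) -> exists ss',
  [/\ all (dary d) ss', size ss' = nleaves t &
     forall u, nleaves u = nleaves t -> graft (graft u ss) rr = graft u ss'].
Proof.
move=> Hss Hs Hrr Hr.
have Hsum : sumn (map nleaves ss) = size rr by rewrite Hr nleaves_graft.
have Hsh : shape (reshape (map nleaves ss) rr) = map nleaves ss.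
  by rewrite reshapeKl // Hsum.
exists (gmap2 ss (reshape (map nleaves ss) rr)); split.
- apply: all_dary_gmap2 => //; exact: all_reshape.
- by rewrite size_gmap2 // size_reshape size_map.
move=> u Hu.
rewrite -{1}(reshapeKr (sh := map nleaves ss) (s := rr)) ?Hsum //.
by rewrite graft_assoc // Hu.
Qed.
Lemma g_mulVr d (c : cloning_system d) n (x : G c n) : gmul c x (ginv c x) = gone c n.
Proof.
set e := gmul c x (ginv c x).
have He : gmul c e e = e.
  by rewrite /e -gmulA (gmulA (ginv c x)) gmulV gmul1.
transitivity (gmul c (gone c n) e); first by rewrite gmul1.
by rewrite -{1}(gmulV e) -gmulA He gmulV.
Qed.

Lemma g_mulr1 d (c : cloning_system d) n (x : G c n) : gmul c x (gone c n) = x.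
Proof. by rewrite -(gmulV x) gmulA g_mulVr gmul1. Qed.

Lemma g_inv_uniq d (c : cloning_system d) n (a b : G c n) :
  gmul c a b = gone c n -> a = ginv c b.
Proof.
move=> H; by rewrite -(g_mulr1 a) -(g_mulVr b) gmulA H gmul1.
Qed.

Lemma g_canc d (c : cloning_system d) n (a x y : G c n) :
  gmul c a x = gmul c a y -> x = y.
Proof.
move=> H; by rewrite -(gmul1 x) -(gmulV a) -gmulA H gmulA gmulV gmul1.
Qed.

Lemma g_inv1 d (c : cloning_system d) n : ginv c (gone c n) = gone c n.
Proof. by rewrite -{1}(g_mulr1 (ginv c (gone c n))) gmulV. Qed.

Lemma g_inv_one d (c : cloning_system d) n (g : G c n) : ginv c g = gone c n -> g = gone c n.
Proof. by move=> H; rewrite -(gmul1 g) -H gmulV. Qed.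

Lemma rho_one d (c : cloning_system d) n (i : 'I_n) : rho c (gone c n) i = i.
Proof.
have := rhoM (gone c n) (gone c n) i; rewrite gmul1 => H.
by apply: (@perm_inj _ (rho c (gone c n))); rewrite -H.
Qed.

Lemma permn_one d (c : cloning_system d) n k : permn (rho c (gone c n)) k = k.
Proof. rewrite /permn; case: insubP => [o _ <-|] //; by rewrite rho_one. Qed.

Lemma permn_lt n (s : 'S_n) k : k < n -> permn s k < n.
Proof. move=> Hk; rewrite /permn; case: insubP => [o _ _|]; [exact: ltn_ord | by rewrite Hk]. Qed.

Lemma kappa_one d (c : cloning_system d) n k : k < n ->
  kappa c k (gone c n) = gone c (n + d.-1).
Proof.
move=> Hk; have := cloneC1 (gone c n) (gone c n) Hk.
rewrite gmul1 permn_one -{1}(g_mulr1 (kappa c k (gone c n))) => H.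
by symmetry; apply: g_canc H.
Qed.

Definition pt d (c : cloning_system d) n T U : triple c := @Triple d c n T (gone c n) U.
Definition isF d (c : cloning_system d) (x : triple c) :=
  wf_triple x /\ tg x = gone c (tn x).

Lemma expand_wf d (c : cloning_system d) (x y : triple c) : 0 < d ->
  expand x y -> wf_triple x /\ wf_triple y.
Proof.
move=> Hd [n T g U k Hw Hk]; split => //.
case: Hw => /= [HT [HU [HnT HnU]]].
have Hp : permn (rho c g) k < n by exact: permn_lt.
rewrite /wf_triple /=; split; [|split; [|split]].
- by apply: dary_addc => //; rewrite HnT.
- by apply: dary_addc => //; rewrite HnU.
- by rewrite nleaves_addc // ?HnT.
- by rewrite nleaves_addc // ?HnU.
Qed.

Lemma expand_one d (c : cloning_system d) (x y : triple c) :
  expand x y -> (tg x = gone c (tn x) <-> tg y = gone c (tn y)).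
Proof.
move=> [n T g U k Hw Hk] /=; split => [->|H]; first exact: kappa_one.
apply: (kappa_inj Hk); by rewrite H kappa_one.
Qed.

Lemma tequiv_isF d (c : cloning_system d) (x y : triple c) : 0 < d ->
  tequiv x y -> (isF x <-> isF y).
Proof.
move=> Hd; elim => {x y} [x y H|x|x y _ IH|x y z _ IH1 _ IH2].
- have [Hx Hy] := expand_wf Hd H; have := expand_one H.
  rewrite /isF; tauto.
- done.
- tauto.
- tauto.
Qed.

Lemma tequiv_one d (c : cloning_system d) (x y : triple c) :
  tequiv x y -> (tg x = gone c (tn x) <-> tg y = gone c (tn y)).
Proof.
elim => {x y} [x y H|x|x y _ IH|x y z _ IH1 _ IH2].
- exact: expand_one.
- done.
- tauto.
- tauto.
Qed.

Lemma isF_eta d (c : cloning_system d) (x : triple c) :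
  isF x -> x = pt c (tn x) (tT x) (tU x).
Proof. by case: x => n T g U [_ /= ->]. Qed.

Lemma expand_pt d (c : cloning_system d) n T U k :
  wf_triple (pt c n T U) -> k < n ->
  expand (pt c n T U) (pt c (n + d.-1) (addc d k T) (addc d k U)).
Proof.
move=> Hw Hk; have := expand_intro Hw Hk.
by rewrite /pt permn_one kappa_one.
Qed.
Lemma all_flatten' (P : pred tree) (ss : seq (seq tree)) : all P (flatten ss) = all (all P) ss.
Proof. by elim: ss => //= s ss <-; rewrite all_cat. Qed.

Definition JF d (c : cloning_system d) (x y : triple c) := exists ss ss',
  [/\ all (dary d) ss, all (dary d) ss', size ss = tn x /\ size ss' = tn y,
      graft (tT x) ss = graft (tT y) ss' & graft (tU x) ss = graft (tU y) ss'].

Lemma JF_refl d (c : cloning_system d) (x : triple c) : JF x x.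
Proof.
exists (nseq (tn x) Leaf), (nseq (tn x) Leaf); split => //; by rewrite ?all_leaves ?size_nseq.
Qed.

Lemma JF_sym d (c : cloning_system d) (x y : triple c) : JF x y -> JF y x.
Proof. by case=> ss [ss' [A B [C D] E F]]; exists ss', ss; split. Qed.

Lemma JF_trans d (c : cloning_system d) (x y z : triple c) :
  isF x -> isF y -> isF z -> JF x y -> JF y z -> JF x z.
Proof.
move=> [[HTx [HUx [HnTx HnUx]]] _] [[HTy [HUy [HnTy HnUy]]] _] [[HTz [HUz [HnTz HnUz]]] _].
move=> [s1 [s2 [A1 A2 [S1 S2] E1 F1]]] [s3 [s4 [A3 A4 [S3 S4] E2 F2]]].
have [a [b [Sha Shb Aa Ab Eab]]] := forest_join (d:=d) (s:=s2) (r:=s3) (etrans S2 (esym S3)) A2 A3.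
have Ey : forall u, nleaves u = tn y ->
    graft (graft u s2) (flatten a) = graft (graft u s3) (flatten b).
  move=> u Hu; rewrite !graft_assoc ?Eab // ?Hu //.
have Sa : size (flatten a) = nleaves (graft (tT x) s1).
  by rewrite size_flatten Sha E1 nleaves_graft // S2 HnTy.
have Sb : size (flatten b) = nleaves (graft (tT z) s4).
  by rewrite size_flatten Shb -E2 nleaves_graft // S3 HnTy.
have Aa' : all (dary d) (flatten a) by rewrite all_flatten'.
have Ab' : all (dary d) (flatten b) by rewrite all_flatten'.
have [s1' [A1' S1' G1]] := graft_graft A1 (etrans S1 (esym HnTx)) Aa' Sa.
have [s4' [A4' S4' G4]] := graft_graft A4 (etrans S4 (esym HnTz)) Ab' Sb.
exists s1', s4'; split => //.
- by rewrite S1' HnTx S4' HnTz.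
- by rewrite -G1 // -G4 // E1 Ey // -E2.
- by rewrite -G1 ?HnUx // -G4 ?HnUz // F1 Ey // -F2.
Qed.
Lemma tequiv_JF d (c : cloning_system d) (x y : triple c) : 0 < d ->
  tequiv x y -> isF x -> JF x y.
Proof.
move=> Hd H; elim: H => {x y} [x y H|x|x y Hxy IH|x y z Hxy IH1 Hyz IH2] Hx.
- case: H Hx => n T g U k Hw Hk [_ /= Hg]; subst g.
  case: (Hw) => /= [HT [HU [HnT HnU]]].
  exists (cs d k n), (nseq (n + d.-1) Leaf); split => //=.
  + exact: all_cs.
  + exact: all_leaves.
  + by rewrite size_cs // size_nseq.
  + rewrite permn_one.
    have E1 : nleaves (addc d k T) = n + d.-1 by rewrite nleaves_addc // HnT.
    by rewrite -E1 graft_leaves -HnT -addc_graft // HnT.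
  + have E1 : nleaves (addc d k U) = n + d.-1 by rewrite nleaves_addc // HnU.
    by rewrite -E1 graft_leaves -HnU -addc_graft // HnU.
- exact: JF_refl.
- apply: JF_sym; apply: IH.
  by apply/(tequiv_isF Hd Hxy).
- have Hy : isF y by apply/(tequiv_isF Hd Hxy).
  have Hz : isF z by apply/(tequiv_isF Hd Hyz).
  exact: (JF_trans Hx Hy Hz (IH1 Hx) (IH2 Hy)).
Qed.

Lemma realize d (c : cloning_system d) : 0 < d -> forall N ss n T U,
  sumn (map tsize ss) < N -> isF (pt c n T U) -> all (dary d) ss -> size ss = n ->
  tequiv (pt c n T U) (pt c (nleaves (graft T ss)) (graft T ss) (graft U ss)).
Proof.
move=> Hd; elim => [|N IH] ss n T U //= HN HF Hall Hs.
have [[/= HT [HU [HnT HnU]]] _] := HF.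
case: (forest_cases ss) => [E|[i [ts [Hi Hn]]]].
  have ET : graft T ss = T by rewrite E Hs -HnT graft_leaves.
  have EU : graft U ss = U by rewrite E Hs -HnU graft_leaves.
  rewrite ET EU HnT; exact: rst_refl.
have Hdts : dary d (Node ts) by rewrite -Hn; apply: (all_nthP Leaf Hall).
move: (Hdts); rewrite daryE => /andP[/eqP Hts Hallts].
set ss2 := take i ss ++ ts ++ drop i.+1 ss.
have ET := graft_step (etrans Hs (esym HnT)) Hi Hn Hts.
have EU := graft_step (etrans Hs (esym HnU)) Hi Hn Hts.
have Hin : i < n by rewrite -Hs.
have H1 : tequiv (pt c n T U) (pt c (n + d.-1) (addc d i T) (addc d i U)).
  by apply: rst_step; apply: expand_pt => //; case: HF.
have HF2 : isF (pt c (n + d.-1) (addc d i T) (addc d i U)).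
  by apply/(tequiv_isF Hd H1).
have Hss : ss = take i ss ++ Node ts :: drop i.+1 ss by rewrite -Hn -drop_nth // cat_take_drop.
have H2 := IH ss2 (n + d.-1) (addc d i T) (addc d i U).
rewrite ET EU; apply: rst_trans H1 _; apply: H2 => //.
- move: HN; rewrite {1}Hss /ss2 !map_cat !sumn_cat map_cons tsizeE /=; lia.
- move: Hall; rewrite {1}Hss /ss2 !all_cat /= => /and3P[-> _ ->].
  by rewrite Hallts.
- rewrite /ss2 !size_cat Hts size_takel ?size_drop; lia.
Qed.

Lemma JF_tequiv d (c : cloning_system d) (x y : triple c) : 0 < d ->
  isF x -> isF y -> JF x y -> tequiv x y.
Proof.
move=> Hd Hx Hy [s1 [s2 [A1 A2 [S1 S2] E F]]].
case: x Hx S1 E F => nx Tx gx Ux [Hwx /= Hgx] /= S1 E F; subst gx.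
case: y Hy S2 E F => ny Ty gy Uy [Hwy /= Hgy] /= S2 E F; subst gy.
have H1 := realize Hd (ltnSn _) (conj Hwx erefl : isF (pt c nx Tx Ux)) A1 S1.
have H2 := realize Hd (ltnSn _) (conj Hwy erefl : isF (pt c ny Ty Uy)) A2 S2.
rewrite E F in H1; exact: (rst_trans _ _ _ _ _ H1 (rst_sym _ _ _ _ H2)).
Qed.
Lemma prod_core d (T' U' W' T U W : tree) s1 s1' r r' :
  all (dary d) s1 -> all (dary d) s1' -> all (dary d) r -> all (dary d) r' ->
  size s1 = nleaves U' -> size r = nleaves U' -> nleaves T' = nleaves U' -> nleaves W' = nleaves U' ->
  size s1' = nleaves U -> size r' = nleaves U -> nleaves T = nleaves U -> nleaves W = nleaves U ->
  graft T' s1 = graft T s1' -> graft U' s1 = graft U s1' ->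
  graft U' r = graft U r' -> graft W' r = graft W r' ->
  exists G F, [/\ all (dary d) G, all (dary d) F, size G = nleaves T' /\ size F = nleaves T,
     graft T' G = graft T F & graft W' G = graft W F].
Proof.
move=> A1 A1' Ar Ar' S1 Sr HT' HW' S1' Sr' HT HW E1 E2 E3 E4.
have [a [b [Sha Shb Aa Ab Eab]]] := forest_join (d:=d) (s:=s1) (r:=r) (etrans S1 (esym Sr)) A1 Ar.
have Aa' : all (dary d) (flatten a) by rewrite all_flatten'.
have Ab' : all (dary d) (flatten b) by rewrite all_flatten'.
have Sa : size (flatten a) = nleaves (graft U s1').
  by rewrite size_flatten Sha -E2 nleaves_graft.
have Sb : size (flatten b) = nleaves (graft U r').
  by rewrite size_flatten Shb -E3 nleaves_graft.
have [F1 [AF1 SF1 G1]] := graft_graft A1' S1' Aa' Sa.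
have [F2 [AF2 SF2 G2]] := graft_graft Ar' Sr' Ab' Sb.
have EF : F1 = F2.
  apply: (graft_inj SF1 SF2).
  rewrite -G1 // -G2 //.
  rewrite -E2 -E3.
  rewrite graft_assoc ?S1 //.
  by rewrite graft_assoc ?Sr // Eab.
have Hsa : size a = size s1 by rewrite -(size_map size a) -/(shape a) Sha size_map.
exists (gmap2 s1 a), F1; split.
- apply: all_dary_gmap2 => //; by rewrite -all_flatten'.
- done.
- by rewrite size_gmap2 // S1 HT' SF1 HT.
- by rewrite -graft_assoc ?S1 // E1 G1.
- by rewrite Eab -graft_assoc ?Sr // E4 G2 // EF.
Qed.

Definition ptt d (c : cloning_system d) T U := pt c (nleaves T) T U.
Definition wfF d (T U : tree) := [/\ dary d T, dary d U & nleaves U = nleaves T].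

Lemma isF_ptt d (c : cloning_system d) T U : wfF d T U -> isF (ptt c T U).
Proof. case=> HT HU Hn; split => //; rewrite /wf_triple /=; tauto. Qed.

Lemma cls_eq d (c : cloning_system d) (x y : triple c) : tequiv x y -> cls x = cls y.
Proof.
move=> H; apply: functional_extensionality => z; apply: propositional_extensionality.
rewrite /cls; split => Hz.
  exact: (rst_trans _ _ _ _ _ Hz H).
exact: (rst_trans _ _ _ _ _ Hz (rst_sym _ _ _ _ H)).
Qed.

Lemma wfF_graft d T U ss : wfF d T U -> all (dary d) ss -> size ss = nleaves T ->
  wfF d (graft T ss) (graft U ss).
Proof.
case=> HT HU Hn Hss Hs; split; try by apply: dary_graft => //; rewrite ?Hn.
by rewrite !nleaves_graft // Hn.
Qed.

Lemma cls_refine d (c : cloning_system d) T U ss : 0 < d -> wfF d T U ->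
  all (dary d) ss -> size ss = nleaves T ->
  cls (ptt c T U) = cls (ptt c (graft T ss) (graft U ss)).
Proof.
move=> Hd HF Hss Hs; apply: cls_eq.
exact: (realize Hd (ltnSn _) (isF_ptt c HF) Hss Hs).
Qed.

Lemma prodF d (c : cloning_system d) T U W : 0 < d -> wfF d T U -> wfF d U W ->
  tmul (cls (ptt c T U)) (cls (ptt c U W)) = cls (ptt c T W).
Proof.
move=> Hd HTU HUW.
have [HT HU HnU] := HTU; have [_ HW HnW] := HUW.
apply: functional_extensionality => z; apply: propositional_extensionality; split.
- case=> n' [T' [g [U' [h [W' [H1 [H2 H3]]]]]]].
  have HF1 : isF (Triple T' g U') by apply/(tequiv_isF Hd H1); exact: isF_ptt.
  have HF2 : isF (Triple U' h W') by apply/(tequiv_isF Hd H2); exact: isF_ptt.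
  case: (HF1) => [[/= HT' [HU' [HnT' HnU']]] /= Hg]; subst g.
  case: (HF2) => [[/= _ [HW' [_ HnW']]] /= Hh]; subst h.
  rewrite gmul1 in H3.
  have [s1 [s1' [A1 A1' [S1 S1'] E1 E2]]] := tequiv_JF Hd H1 HF1.
  have [r [r' [Ar Ar' [Sr Sr'] E3 E4]]] := tequiv_JF Hd H2 HF2.
  simpl in *.
  have [Gf [Ff [AG AF [SG SF] EG EF]]] := prod_core A1 A1' Ar Ar'
    (etrans S1 (esym HnU')) (etrans Sr (esym HnU')) (etrans HnT' (esym HnU'))
    (etrans HnW' (esym HnU')) (etrans S1' (esym HnU)) Sr'
    (esym HnU) HnW E1 E2 E3 E4.
  apply: (rst_trans _ _ _ _ _ H3); apply: JF_tequiv => //; last first.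
    exists Gf, Ff; split => //; by rewrite SG HnT'.
  by apply: isF_ptt; split => //; rewrite HnW HnU.
- move=> H; exists (nleaves T), T, (gone c _), U, (gone c _), W; split.
    exact: rst_refl.
  split.
    by rewrite /cls /ptt /pt HnU; exact: rst_refl.
  by rewrite gmul1.
Qed.
Lemma tinvF d (c : cloning_system d) T U : 0 < d -> wfF d T U ->
  tinv (cls (ptt c T U)) = cls (ptt c U T).
Proof.
move=> Hd HTU; have [HT HU HnU] := HTU.
have HUT : wfF d U T by split.
apply: functional_extensionality => z; apply: propositional_extensionality; split.
- case=> n' [T' [g [U' [H1 H2]]]].
  have HF1 : isF (Triple T' g U') by apply/(tequiv_isF Hd H1); exact: isF_ptt.
  case: (HF1) => [[/= HT' [HU' [HnT' HnU']]] /= Hg]; subst g.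
  rewrite g_inv1 in H2.
  have [s [s' [A A' [S S'] E1 E2]]] := tequiv_JF Hd H1 HF1.
  apply: (rst_trans _ _ _ _ _ H2); apply: JF_tequiv => //; last first.
    exists s, s'; split => //=; by rewrite S S' HnU.
- move=> H; exists (nleaves T), T, (gone c _), U; split.
    exact: rst_refl.
  by rewrite g_inv1; move: H; rewrite /cls /ptt /pt HnU.
Qed.

Lemma Fd_char d (c : cloning_system d) (X : triple c -> Prop) :
  Fd X <-> exists T U, wfF d T U /\ X = cls (ptt c T U).
Proof.
split.
- case=> n [T [U [[/= HT [HU [HnT HnU]]] E]]]; subst n.
  by exists T, U; split => //; split => //; rewrite HnU.
- case=> T [U [[HT HU Hn] E]]; exists (nleaves T), T, U; split => //; rewrite /wf_triple /=; tauto.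
Qed.

Lemma tmul_F d (c : cloning_system d) T1 U1 T2 U2 : 0 < d -> wfF d T1 U1 -> wfF d T2 U2 ->
  exists T U, wfF d T U /\ tmul (cls (ptt c T1 U1)) (cls (ptt c T2 U2)) = cls (ptt c T U).
Proof.
move=> Hd H1 H2; have [HT1 HU1 Hn1] := H1; have [HT2 HU2 Hn2] := H2.
have [r1 [r2 [A1 A2 S1 S2 E]]] := tree_join HU1 HT2.
rewrite (cls_refine c Hd H1 A1 (etrans S1 Hn1)) (cls_refine c Hd H2 A2 S2) E.
have W1 := wfF_graft H1 A1 (etrans S1 Hn1).
have W2 := wfF_graft H2 A2 S2.
rewrite E in W1.
have W1' : wfF d (graft U1 r1) (graft T1 r1).
  by case: W1 => ? ? ?; rewrite E; split.
exists (graft T1 r1), (graft U2 r2); split.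
  case: W1 => ? ? Ha; case: W2 => ? ? Hb; split => //; by rewrite Hb -Ha.
exact: prodF.
Qed.
Lemma easy d (c : cloning_system d) T U : 0 < d -> wfF d T U ->
  conjFd (cls (ptt c T U)) = Fd (c:=c).
Proof.
move=> Hd HTU; have [HT HU HnU] := HTU.
have HUT : wfF d U T by split.
apply: functional_extensionality => Y; apply: propositional_extensionality; split.
- case=> Z [/Fd_char [A [B [HAB ->]]] ->].
  rewrite tinvF //.
  have [T1 [U1 [H1 ->]]] := tmul_F c Hd HUT HAB.
  have [T2 [U2 [H2 ->]]] := tmul_F c Hd H1 HTU.
  by apply/Fd_char; exists T2, U2.
- case/Fd_char=> A [B [HAB ->]]; have [HA HB HnB] := HAB.
  have [s1 [s2 [A1 A2 S1 S2 E12]]] := tree_join HU HA.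
  set J := graft U s1; set T1 := graft T s1; set B1 := graft B s2.
  have W1 : wfF d T1 J := wfF_graft HTU A1 (etrans S1 HnU).
  have W2 : wfF d J B1 by rewrite /J E12; exact: wfF_graft HAB A2 S2.
  have EX : cls (ptt c T U) = cls (ptt c T1 J) := cls_refine c Hd HTU A1 (etrans S1 HnU).
  have EY : cls (ptt c A B) = cls (ptt c J B1) by rewrite /J E12; exact: cls_refine.
  have [HT1 HJ HnJ] := W1; have [_ HB1 HnB1] := W2.
  have [s3 [s4 [A3 A4 S3 S4 E34]]] := tree_join HB1 HJ.
  set K := graft J s4; set T2 := graft T1 s3; set J3 := graft J s3; set T4 := graft T1 s4.
  have S3J : size s3 = nleaves J by rewrite S3 HnB1.
  have S3T : size s3 = nleaves T1 by rewrite S3J HnJ.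
  have S4T : size s4 = nleaves T1 by rewrite S4 HnJ.
  have HJT1 : wfF d J T1 by split.
  have W3 : wfF d J3 T2 := wfF_graft HJT1 A3 S3J.
  have W4 : wfF d T4 K := wfF_graft W1 A4 S4T.
  have W5 : wfF d J3 K.
    rewrite /K -E34; exact: wfF_graft W2 A3 S3J.
  have W6 : wfF d T2 T4.
    have [Ha1 Ha2 Ha] := W3; have [Hb1 Hb2 Hb] := W4; have [Hc1 Hc2 Hc] := W5.
    by split => //; rewrite -Hb Hc Ha.
  have W7 : wfF d J3 T4.
    have [Ha1 Ha2 Ha] := W3; have [Hb1 Hb2 Hb] := W6; by split => //; rewrite Hb Ha.
  exists (cls (ptt c T2 T4)); split.
    by apply/Fd_char; exists T2, T4.
  rewrite EX tinvF // (cls_refine c Hd HJT1 A3 S3J) -/J3 -/T2.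
  rewrite prodF // (cls_refine c Hd W1 A4 S4T) -/T4 -/K prodF //.
  rewrite EY (cls_refine c Hd W2 A3 S3J) -/J3 E34.
  done.
Qed.
Lemma grow d (c : cloning_system d) (x : triple c) : 1 < d -> wf_triple x ->
  forall j, exists x', [/\ tequiv x x', wf_triple x' & j <= tn x'].
Proof.
move=> Hd Hx; elim => [|j [x' [H1 H2 H3]]].
  by exists x; split => //; exact: rst_refl.
case: x' H1 H2 H3 => n T g U H1 H2 /= H3.
have Hn : 0 < n.
  case: (H2) => /= HT [_ [HnT _]]; rewrite -HnT; apply: (nleaves_pos (d:=d)) => //; lia.
have He := expand_intro H2 Hn.
have [_ Hw] := expand_wf (ltnW Hd) He.
eexists; split; [exact: (rst_trans _ _ _ _ _ H1 (rst_step _ _ _ _ He)) | exact: Hw | ].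
rewrite /=; lia.
Qed.

Lemma key d (c : cloning_system d) n T (g : G c n) U a m :
  let X := cls (Triple T g U) in
  wf_triple (Triple T g U) -> conjFd X = Fd (c:=c) -> 0 < d -> a < n -> m < n ->
  gmul c (kappa c a (ginv c g)) (kappa c m g) = gone c (n + d.-1).
Proof.
move=> X Hw Hc Hd Ha Hm.
have [/= HT [HU [HnT HnU]]] := Hw.
set b := permn (rho c g) m.
have Hb : b < n by exact: permn_lt.
set Z := cls (pt c (n + d.-1) (addc d a T) (addc d b T)).
have FZ : Fd Z.
  exists (n + d.-1), (addc d a T), (addc d b T); split => //.
  rewrite /wf_triple /=; split; [|split; [|split]].
  - by apply: dary_addc => //; rewrite HnT.
  - by apply: dary_addc => //; rewrite HnT.
  - by rewrite nleaves_addc // HnT.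
  - by rewrite nleaves_addc // HnT.
set Y := tmul (tmul (tinv X) Z) X.
have FY : Fd Y by rewrite -Hc; exists Z.
case: FY => n2 [A [B [_ EY]]].
have Hwinv : wf_triple (Triple U (ginv c g) T) by rewrite /wf_triple /=.
set T' := addc d (permn (rho c (ginv c g)) a) U.
have HY : Y (Triple T' (gmul c (gmul c (kappa c a (ginv c g)) (gone c _)) (kappa c m g)) (addc d m U)).
  exists (n + d.-1), T', (gmul c (kappa c a (ginv c g)) (gone c _)), (addc d b T), (kappa c m g), (addc d m U).
  split; [|split].
  - exists (n + d.-1), T', (kappa c a (ginv c g)), (addc d a T), (gone c _), (addc d b T).
    split; [|split].
    + exists n, T, g, U; split; first exact: rst_refl.
      exact: (rst_sym _ _ _ _ (rst_step _ _ _ _ (expand_intro Hwinv Ha))).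
    + exact: rst_refl.
    + exact: rst_refl.
  - exact: (rst_sym _ _ _ _ (rst_step _ _ _ _ (expand_intro Hw Hm))).
  - exact: rst_refl.
rewrite EY in HY.
have := (proj2 (tequiv_one HY)) erefl.
by rewrite /= g_mulr1.
Qed.

Lemma hard d (c : cloning_system d) (x : triple c) : 1 < d -> diverse c ->
  wf_triple x -> conjFd (cls x) = Fd (c:=c) -> Fd (cls x).
Proof.
move=> Hd [n0 Hdiv] Hx Hc.
have [x' [H1 H2 H3]] := grow Hd Hx (maxn n0 1).
rewrite (cls_eq H1) in Hc *.
case: x' H1 H2 H3 Hc => n T g U _ Hw /= Hn Hc.
have Hn0 : n0 <= n by apply: leq_trans Hn; exact: leq_maxl.
have Hn1 : 0 < n by apply: leq_trans Hn; exact: leq_maxr.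
have K := key Hw Hc (ltnW Hd).
have Ek : forall k, k < n -> kappa c k (ginv c g) = ginv c (kappa c 0 g).
  move=> k Hk; apply: g_inv_uniq; exact: K.
have Hy := Hdiv n Hn0 (kappa c 0 (ginv c g)).
have Hy1 : kappa c 0 (ginv c g) = gone c (n + d.-1).
  apply: Hy => k Hk; exists (ginv c g); by rewrite !Ek.
have Hg : ginv c g = gone c n.
  apply: (kappa_inj Hn1); by rewrite Hy1 kappa_one.
have Hg1 := g_inv_one Hg; subst g.
exists n, T, U; split => //.
Qed.

Theorem mainTheorem3 (d : nat) (hd : 2 <= d) (c : cloning_system d)
  (hdiv : diverse c) (x : triple c) (hx : wf_triple x) :
  conjFd (cls x) = Fd (c:=c) <-> Fd (cls x).
Proof.
split; first exact: hard.
case/Fd_char => T [U [HTU ->]].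
exact: (easy c (ltnW hd) HTU).
Qed.
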